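(* Under the standing assumptions below, for every $i\in P$ the sum $\sum_{r\in P,\ r<i} b_r$ is finite, where $b_r$ is the rank of the free $R$-module $M_r/D_r$.
   Context: Standing assumptions: $R$ is a principal ideal domain; $P$ is a lattice with a compatible abelian group structure ($(P,+,0)$ abelian group, $a\le b\Rightarrow a+c\le b+c$). $U_0=\{s\in P:s\ge 0\}$, $R[U_0]$ the monoid ring (finite sums $\sum c_st^s$, $c_s\in R$), graded by $\deg(ct^s)=s$. $M=\bigoplus_{a\in P}M_a$ is a $P$-graded $R[U_0]$-module (persistence module) that is graded projective, with each $M_a$ a finitely generated $R$-module. For $r\in P$, $D_r=\sum_{q<r}t^{\,r-q}M_q\subseteq M_r$ (sum of images of the structure maps from degrees $q<r$); $M_r/D_r$ is a free $R$-module and $b_r$ denotes its rank. *)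

(* Defs.v *)
From HB Require Import structures.
From mathcomp Require Import all_boot all_order all_algebra.
Set Implicit Arguments. Unset Strict Implicit. Unset Printing Implicit Defensive.
Import GRing.Theory.
Local Open Scope ring_scope.

Definition is_ideal (R : comPzRingType) (I : R -> Prop) : Prop :=
  [/\ I 0, (forall x y, I x -> I y -> I (x + y)) & (forall a x, I x -> I (a * x))].

Definition PID (R : idomainType) : Prop :=
  forall I : R -> Prop, is_ideal I -> exists a : R, forall x, I x <-> exists c, x = c * a.

Definition lattice_ordered_group (P : zmodType) (le : rel P) : Prop :=
  [/\ [/\ (forall a, le a a),
      (forall a b, le a b -> le b a -> a = b) &
      (forall a b c, le a b -> le b c -> le a c)],
      (forall a b, exists j, [/\ le a j, le b j & forall c, le a c -> le b c -> le j c]),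
      (forall a b, exists m, [/\ le m a, le m b & forall c, le c a -> le c b -> le c m]) &
      (forall a b c, le a b -> le (a + c) (b + c))].

Definition plt (P : eqType) (le : rel P) (a b : P) : bool := (a != b) && le a b.

(* A P-graded R[U_0]-module M = (+)_a M_a is the same as a family of R-modules
   M_a together with the action of t^s : M_a -> M_(a+s) for s >= 0; we record
   it as the maps pm_map a b : M_a -> M_b for a <= b (multiplication by t^(b-a)). *)
Record pmod (R : pzRingType) (P : Type) (le : rel P) := PMod {
  pm_obj :> P -> lmodType R;
  pm_map : forall a b : P, le a b -> pm_obj a -> pm_obj b;
  pm_lin : forall a b (h : le a b) (k : R) (x y : pm_obj a),
      pm_map h (k *: x + y) = k *: pm_map h x + pm_map h y;
  pm_id : forall a (h : le a a) (x : pm_obj a), pm_map h x = x;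
  pm_comp : forall a b c (hab : le a b) (hbc : le b c) (hac : le a c) (x : pm_obj a),
      pm_map hbc (pm_map hab x) = pm_map hac x
}.

Definition pmod_hom (R : pzRingType) (P : Type) (le : rel P) (A B : pmod R le)
    (f : forall a, A a -> B a) : Prop :=
  (forall a (k : R) (x y : A a), f a (k *: x + y) = k *: f a x + f a y) /\
  (forall a b (h : le a b) (x : A a), f b (@pm_map _ _ _ A a b h x) = @pm_map _ _ _ B a b h (f a x)).

Definition graded_projective (R : pzRingType) (P : Type) (le : rel P) (M : pmod R le) : Prop :=
  forall (A B : pmod R le) (f : forall a, A a -> B a) (g : forall a, M a -> B a),
    pmod_hom f -> (forall a (y : B a), exists x, f a x = y) -> pmod_hom g ->
    exists h : forall a, M a -> A a,
      pmod_hom h /\ forall a (x : M a), f a (h a x) = g a x.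

Definition fin_gen (R : pzRingType) (V : lmodType R) : Prop :=
  exists (n : nat) (e : 'I_n -> V), forall v : V, exists c : 'I_n -> R,
    v = \sum_(i < n) c i *: e i.

(* membership in D_r = sum_{q<r} t^(r-q) M_q *)
Definition inD (R : pzRingType) (P : zmodType) (le : rel P) (M : pmod R le)
    (r : P) (x : M r) : Prop :=
  exists (n : nat) (q : 'I_n -> P) (hq : forall i, le (q i) r) (y : forall i, M (q i)),
    (forall i, plt le (q i) r) /\ x = \sum_(i < n) @pm_map _ _ _ M (q i) r (hq i) (y i).

(* M_r / D_r is a free R-module of rank n: there are e_1..e_n in M_r whose
   classes form a basis of M_r / D_r (written without forming the quotient). *)
Definition quot_free_rank (R : pzRingType) (P : zmodType) (le : rel P) (M : pmod R le)
    (r : P) (n : nat) : Prop :=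
  exists e : 'I_n -> M r,
    (forall x : M r, exists c : 'I_n -> R, @inD _ _ _ M r (x - \sum_(i < n) c i *: e i)) /\
    (forall c : 'I_n -> R, @inD _ _ _ M r (\sum_(i < n) c i *: e i) -> forall i, c i = 0).

(* Main.v *)
Require Import Defs.
From HB Require Import structures.
From mathcomp Require Import all_boot all_order all_algebra.
From mathcomp Require Import boolp.
From Stdlib Require Import FunctionalExtensionality ProofIrrelevance.
Set Implicit Arguments. Unset Strict Implicit. Unset Printing Implicit Defensive.
Import GRing.Theory.
Local Open Scope ring_scope.

Section A.
Variables (R : idomainType) (P : zmodType) (le : rel P) (M : pmod R le).

Definition okA a (x : forall q, M q) : Prop :=
  (exists s : seq P, forall q, q \notin s -> x q = 0) /\ (forall q, x q != 0 -> le q a).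
Record Aty (a : P) := MkA { av : forall q, M q; aok : okA a av }.

HB.instance Definition _ a := gen_eqMixin (Aty a).
HB.instance Definition _ a := gen_choiceMixin (Aty a).

Lemma A_eq a (x y : Aty a) : (forall q, av x q = av y q) -> x = y.
Proof.
case: x => v p; case: y => v' p' /= E.
have E' : v = v' by apply: functional_extensionality_dep.
subst v'. by rewrite (proof_irrelevance _ p p').
Qed.

Lemma ok0 a : okA a (fun q => 0).
Proof. by split; [exists [::] | move=> q; rewrite eqxx]. Qed.

Lemma okD a x y : okA a x -> okA a y -> okA a (fun q => x q + y q).
Proof.
move=> [[s1 H1] D1] [[s2 H2] D2]; split.
  exists (s1 ++ s2) => q; rewrite mem_cat negb_or => /andP[q1 q2].
  by rewrite H1 // H2 // addr0.
move=> q; case: (boolP (x q != 0)) => [/D1 //|]; rewrite negbK => /eqP ->.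
by rewrite add0r => /D2.
Qed.

Lemma okN a x : okA a x -> okA a (fun q => - x q).
Proof.
move=> [[s1 H1] D1]; split.
  by exists s1 => q /H1 ->; rewrite oppr0.
by move=> q; rewrite oppr_eq0 => /D1.
Qed.

Lemma okZ a (k : R) x : okA a x -> okA a (fun q => k *: x q).
Proof.
move=> [[s1 H1] D1]; split.
  by exists s1 => q /H1 ->; rewrite scaler0.
move=> q; case: (boolP (x q != 0)) => [/D1 //|]; rewrite negbK => /eqP ->.
by rewrite scaler0 eqxx.
Qed.

Definition A0 a : Aty a := MkA (ok0 a).
Definition AD a (x y : Aty a) : Aty a := MkA (okD (aok x) (aok y)).
Definition AN a (x : Aty a) : Aty a := MkA (okN (aok x)).
Definition AZ a (k : R) (x : Aty a) : Aty a := MkA (okZ k (aok x)).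

Lemma ADA a : associative (@AD a).
Proof. by move=> x y z; apply: A_eq => q /=; rewrite addrA. Qed.
Lemma ADC a : commutative (@AD a).
Proof. by move=> x y; apply: A_eq => q /=; rewrite addrC. Qed.
Lemma AD0 a : left_id (A0 a) (@AD a).
Proof. by move=> x; apply: A_eq => q /=; rewrite add0r. Qed.
Lemma ADN a : left_inverse (A0 a) (@AN a) (@AD a).
Proof. by move=> x; apply: A_eq => q /=; rewrite addNr. Qed.

HB.instance Definition _ a := GRing.isZmodule.Build (Aty a) (@ADA a) (@ADC a) (@AD0 a) (@ADN a).

Lemma AZA a k l (x : Aty a) : AZ k (AZ l x) = AZ (k * l) x.
Proof. by apply: A_eq => q /=; rewrite scalerA. Qed.
Lemma AZ1 a : left_id 1 (@AZ a).
Proof. by move=> x; apply: A_eq => q /=; rewrite scale1r. Qed.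
Lemma AZDr a : right_distributive (@AZ a) +%R.
Proof. by move=> k x y; apply: A_eq => q /=; rewrite scalerDr. Qed.
Lemma AZDl a (v : Aty a) : {morph (@AZ a)^~ v: k l / k + l}.
Proof. by move=> k l; apply: A_eq => q /=; rewrite scalerDl. Qed.

HB.instance Definition _ a := GRing.Zmodule_isLmodule.Build R (Aty a) (@AZA a) (@AZ1 a) (@AZDr a) (@AZDl a).

Lemma avD a (x y : Aty a) q : av (x + y) q = av x q + av y q. Proof. by []. Qed.
Lemma avZ a k (x : Aty a) q : av (k *: x) q = k *: av x q. Proof. by []. Qed.
Lemma av0 a q : av (0 : Aty a) q = 0. Proof. by []. Qed.

Lemma pm0 a b (h : le a b) : pm_map h (0 : M a) = 0.
Proof.
have := pm_lin (p:=M) h 1 0 0; rewrite !scale1r addr0 => E.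
by apply: (@addrI _ (pm_map h 0)); rewrite addr0 -E.
Qed.
Lemma pmD a b (h : le a b) (x y : M a) : pm_map h (x + y) = pm_map h x + pm_map h y.
Proof. by have := pm_lin (p:=M) h 1 x y; rewrite !scale1r. Qed.
Lemma pmZ a b (h : le a b) k (x : M a) : pm_map h (k *: x) = k *: pm_map h x.
Proof. by have := pm_lin (p:=M) h k x 0; rewrite !addr0 pm0 addr0. Qed.
Lemma pm_sum a b (h : le a b) (I : Type) (s : seq I) (F : I -> M a) :
  pm_map h (\sum_(j <- s) F j) = \sum_(j <- s) pm_map h (F j).
Proof.
elim: s => [|j s IH]; first by rewrite !big_nil pm0.
by rewrite !big_cons pmD IH.
Qed.

Definition mapo a b (x : M a) : M b :=
  (match le a b as c return le a b = c -> M b with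
   | true => fun e => pm_map e x | false => fun _ => 0 end) (erefl (le a b)).
Lemma mapo_cases a b (x : M a) (Pr : M b -> Prop) :
  (forall h : le a b, Pr (pm_map h x)) -> (~~ le a b -> Pr 0) -> Pr (mapo b x).
Proof.
move=> H1 H0; rewrite /mapo.
suff G : forall c (e : le a b = c), Pr ((match c as c0 return le a b = c0 -> M b with
   | true => fun e => pm_map e x | false => fun _ => 0 end) e) by apply: G.
case=> e; [exact: H1 | by apply: H0; rewrite e].
Qed.
Lemma mapoE a b (h : le a b) (x : M a) : mapo b x = pm_map h x.
Proof.
apply: (mapo_cases (Pr := fun z => z = pm_map h x)).
  by move=> h'; rewrite (bool_irrelevance h' h).
by rewrite h.
Qed.
Lemma mapo_out a b (x : M a) : ~~ le a b -> mapo b x = 0.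
Proof. move=> nh; apply: (mapo_cases (Pr := fun z => z = 0)) => // h; by rewrite h in nh. Qed.
Lemma mapo0 a b : mapo b (0 : M a) = 0.
Proof. by apply: (mapo_cases (Pr := fun z => z = 0)) => // h; exact: pm0. Qed.
Lemma mapoD a b (x y : M a) : mapo b (x + y) = mapo b x + mapo b y.
Proof.
case: (boolP (le a b)) => [h|nh]; first by rewrite !(mapoE h) pmD.
by rewrite !mapo_out // addr0.
Qed.
Lemma mapoZ a b k (x : M a) : mapo b (k *: x) = k *: mapo b x.
Proof.
case: (boolP (le a b)) => [h|nh]; first by rewrite !(mapoE h) pmZ.
by rewrite !mapo_out // scaler0.
Qed.

Lemma sum_cover (V : zmodType) (F : P -> V) (s t : seq P) :
  {subset s <= t} -> (forall q, q \notin s -> F q = 0) ->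
  \sum_(q <- undup t) F q = \sum_(q <- undup s) F q.
Proof.
move=> st F0.
rewrite (bigID (fun q => q \in s)) /= [X in _ + X]big1 ?addr0; last first.
  by move=> q /F0.
rewrite -big_filter; apply: perm_big; apply: uniq_perm.
- by rewrite filter_uniq // undup_uniq.
- exact: undup_uniq.
move=> q; rewrite mem_filter !mem_undup; apply/andP/idP => [[]//|qs].
by split=> //; apply: st.
Qed.

Lemma sum_cover2 (V : zmodType) (F : P -> V) (s t : seq P) :
  (forall q, q \notin s -> F q = 0) -> (forall q, q \notin t -> F q = 0) ->
  \sum_(q <- undup s) F q = \sum_(q <- undup t) F q.
Proof.
move=> Fs Ft.
rewrite -(@sum_cover _ F s (s ++ t)) ?(@sum_cover _ F t (s ++ t)) //.
- by move=> q; rewrite mem_cat orbC => ->.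
- by move=> q; rewrite mem_cat => ->.
Qed.

Definition supp a (x : Aty a) : seq P :=
  proj1_sig (cid (proj1 (aok x))).
Lemma suppP a (x : Aty a) q : q \notin supp x -> av x q = 0.
Proof.
rewrite /supp; case: cid => s Hs /=; exact: Hs.
Qed.

Definition fA a (x : Aty a) : M a := \sum_(q <- undup (supp x)) mapo a (av x q).

Lemma fAE a (x : Aty a) s : (forall q, q \notin s -> av x q = 0) ->
  fA x = \sum_(q <- undup s) mapo a (av x q).
Proof.
move=> Hs; apply: sum_cover2 => q.
  by move/suppP ->; rewrite mapo0.
by move/Hs ->; rewrite mapo0.
Qed.

Hypothesis le_refl : forall a, le a a.
Hypothesis le_anti : forall a b, le a b -> le b a -> a = b.
Hypothesis le_trans : forall a b c, le a b -> le b c -> le a c.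

Lemma okmap a b (h : le a b) v : okA a v -> okA b v.
Proof. by move=> [H1 D1]; split=> // q /D1 qa; apply: le_trans qa h. Qed.
Definition Amap a b (h : le a b) (x : Aty a) : Aty b := MkA (okmap h (aok x)).

Lemma Amap_lin a b (h : le a b) (k : R) (x y : Aty a) :
  Amap h (k *: x + y) = k *: Amap h x + Amap h y.
Proof. by apply: A_eq. Qed.
Lemma Amap_id a (h : le a a) (x : Aty a) : Amap h x = x.
Proof. by apply: A_eq. Qed.
Lemma Amap_comp a b c (hab : le a b) (hbc : le b c) (hac : le a c) (x : Aty a) :
  Amap hbc (Amap hab x) = Amap hac x.
Proof. by apply: A_eq. Qed.

Definition Apm : pmod R le := @PMod R P le (fun a => Aty a) Amap Amap_lin Amap_id Amap_comp.

Lemma fA_hom : @pmod_hom _ _ _ Apm M (fun a (x : Aty a) => fA x).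
Proof.
split.
  move=> a k x y /=.
  set s := supp x ++ supp y ++ supp (k *: x + y).
  have cov : forall z : Aty a, {subset supp z <= s} -> forall q, q \notin s -> av z q = 0.
    by move=> z sub q qs; apply: suppP; apply: contra qs; apply: sub.
  rewrite (@fAE _ (k *: x + y) s); last first.
    by apply: cov => q qs; rewrite /s !mem_cat qs !orbT.
  rewrite (@fAE _ x s); last by apply: cov => q qs; rewrite /s !mem_cat qs.
  rewrite (@fAE _ y s); last by apply: cov => q qs; rewrite /s !mem_cat qs orbT.
  rewrite scaler_sumr -big_split /=; apply: eq_bigr => q _.
  by rewrite [X in mapo _ X]/= mapoD mapoZ.
move=> a b h x /=.
rewrite (@fAE _ (Amap h x) (supp x)); last by move=> q /suppP.
rewrite /fA pm_sum; apply: eq_bigr => q _ /=.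
case: (boolP (le q a)) => [hq|nq].
  by rewrite (mapoE hq) (mapoE (le_trans hq h)) (pm_comp hq h (le_trans hq h)).
have -> : av x q = 0.
  apply/eqP; apply: contraNT nq; exact: (proj2 (aok x)).
by rewrite !mapo0 pm0.
Qed.

Lemma lin_sum (U V : lmodType R) (phi : U -> V) :
  (forall k x y, phi (k *: x + y) = k *: phi x + phi y) ->
  forall (I : Type) (s : seq I) (c : I -> R) (w : I -> U),
  phi (\sum_(j <- s) c j *: w j) = \sum_(j <- s) c j *: phi (w j).
Proof.
move=> Hl.
have phi0 : phi 0 = 0.
  have := Hl 1 0 0; rewrite !scale1r addr0 => E.
  by apply: (@addrI _ (phi 0)); rewrite addr0 -E.
move=> I s c w; elim: s => [|j s IH]; first by rewrite !big_nil phi0.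
by rewrite !big_cons Hl IH.
Qed.

Lemma av_sum a (I : Type) (s : seq I) (F : I -> Aty a) q :
  av (\sum_(j <- s) F j) q = \sum_(j <- s) av (F j) q.
Proof.
elim: s => [|j s IH]; first by rewrite !big_nil.
by rewrite !big_cons avD IH.
Qed.

Lemma main_lemma (Hproj : graded_projective M) (Hfg : forall a, fin_gen (M a))
  (b : P -> nat) (Hb : forall r, quot_free_rank M r (b r)) (i : P) :
  exists s : seq P, forall r : P, plt le r i -> (b r != 0)%N -> r \in s.
Proof.
have fsurj : forall a (y : M a), exists x : Apm a, fA x = y.
  move=> a y.
  have ok : okA a (fun q => if q == a then mapo q y else 0).
    split.
      by exists [:: a] => q; rewrite inE => /negbTE ->.
    by move=> q; case: (q =P a) => [-> _|_]; [exact: le_refl | rewrite eqxx].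
  exists (MkA ok).
  rewrite (@fAE _ (MkA ok) [:: a]) /=; last by move=> q; rewrite inE => /negbTE ->.
  by rewrite big_cons big_nil addr0 eqxx !(mapoE (le_refl a)) !pm_id.
have ghom : @pmod_hom _ _ _ M M (fun a (x : M a) => x) by [].
case: (Hproj Apm M (fun a (x : Aty a) => fA x) (fun a x => x) fA_hom fsurj ghom)
  => h [[hlin hcomm] hf].
case: (Hfg i) => n [v Hv].
set S := flatten [seq supp (h i (v j)) | j <- enum 'I_n].
exists S => r /andP[ri lri] br.
case: (Hb r) => e [_ Hind].
have b0 : (0 < b r)%N by rewrite lt0n.
pose k0 := Ordinal b0.
pose X := h r (e k0).
have HX : forall q, q \notin S -> av X q = 0.
  move=> q qS.
  have E1 := hcomm r i lri (e k0).
  have -> : av X q = av (h i (pm_map lri (e k0))) q by rewrite E1.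
  case: (Hv (pm_map lri (e k0))) => c ->.
  rewrite (lin_sum (hlin i)) av_sum big1 // => j _.
  rewrite avZ suppP ?scaler0 //; apply: contra qS => qj.
  apply/flattenP; exists (supp (h i (v j))) => //.
  by apply: map_f; rewrite mem_enum.
case rS: (r \in S) => //; exfalso.
have Hin : @inD _ _ _ M r (e k0).
  have Ee : e k0 = fA X by rewrite hf.
  pose l := [seq q <- undup (supp X) | (q != r) && le q r].
  have hq : forall k : 'I_(size l), le (nth r l k) r.
    move=> k; have := mem_nth r (ltn_ord k); rewrite mem_filter.
    by case/andP=> /andP[].
  exists (size l), (fun k => nth r l k), hq, (fun k => av X (nth r l k)).
  split.
    move=> k; have := mem_nth r (ltn_ord k); rewrite mem_filter.
    by case/andP=> /andP[] ? ? _; rewrite /plt; apply/andP.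
  rewrite Ee /fA.
  have -> : \sum_(q <- undup (supp X)) mapo r (av X q) = \sum_(q <- l) mapo r (av X q).
    rewrite big_filter [RHS]big_mkcond /=; apply: eq_bigr => q _.
    case: ifP => // /negbT; rewrite negb_and negbK => /orP[/eqP ->|nq].
      by rewrite HX ?rS // mapo0.
    by rewrite mapo_out.
  rewrite (big_nth r) big_mkord; apply: eq_bigr => k _.
  exact: mapoE.
have := Hind (fun k => (k == k0)%:R).
have -> : \sum_(k < b r) (k == k0)%:R *: e k = e k0.
  rewrite (bigD1 k0) //= scale1r big1 ?addr0 // => k /negbTE ->.
  by rewrite scale0r.
move=> /(_ Hin k0); rewrite eqxx => /eqP; by rewrite oner_eq0.
Qed.
End A.

Theorem theorem3p18 (R : idomainType) (P : zmodType) (le : rel P)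
    (M : pmod R le) (b : P -> nat) :
  PID R ->
  lattice_ordered_group le ->
  graded_projective M ->
  (forall a : P, fin_gen (M a)) ->
  (forall r : P, quot_free_rank M r (b r)) ->
  forall i : P, exists s : seq P,
    forall r : P, plt le r i -> (b r != 0)%N -> r \in s.
Proof.
move=> _ [[Hr Ha Ht] _ _ _] Hproj Hfg Hb i.
exact: (main_lemma Hr Ht Hproj Hfg Hb).
Qed.
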